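(* Let $f(x)=\frac1n\sum_{i=1}^n f_i(x)$ with $f_i:\mathbb{R}^d\to\mathbb{R}$, where each $f_i$ is $L$-smooth and $f^*=\inf_x f(x)>-\infty$. Run No Full Grad SARAH (described in the context) with stepsize $\gamma\le\frac1{20L(n+1)}$. Then, to reach $\varepsilon$-accuracy, where $\varepsilon^2=\frac1S\sum_{s=1}^S\|\nabla f(x_s^0)\|^2$, the method needs $\mathcal{O}\left(\frac{nL}{\varepsilon^2}\right)$ iterations and oracle calls.
   Context: No Full Grad SARAH: input $x_0^0\in\mathbb{R}^d$, $v_0=0$, stepsize $\gamma>0$. For epochs $s=0,1,\dots,S$: choose a permutation $\pi_s^1,\dots,\pi_s^n$ of $\{1,\dots,n\}$ (by any shuffling rule); set $\tilde v_s^1=0$, $v_s^0=v_s$, $x_s^1=x_s^0-\gamma v_s^0$; for $t=1,\dots,n$ set $\tilde v_s^{t+1}=\frac{t-1}{t}\tilde v_s^t+\frac1t\nabla f_{\pi_s^t}(x_s^t)$, $v_s^t=\frac1n\big(\nabla f_{\pi_s^t}(x_s^t)-\nabla f_{\pi_s^t}(x_s^{t-1})\big)+v_s^{t-1}$, $x_s^{t+1}=x_s^t-\gamma v_s^t$; then set $x_{s+1}^0=x_s^{n+1}$ and $v_{s+1}=\tilde v_s^{n+1}$. An oracle call is one evaluation of a single component gradient $\nabla f_i$; an iteration is one inner step. The $\mathcal{O}(\cdot)$ hides absolute constants and the dependence on the initial gap. *)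

(* Defs.v *)
From HB Require Import structures.
From mathcomp Require Import all_boot all_order all_algebra all_fingroup.
From mathcomp Require Import all_classical all_reals all_analysis.
Set Implicit Arguments. Unset Strict Implicit. Unset Printing Implicit Defensive.
Import Order.TTheory GRing.Theory Num.Theory.
Import numFieldNormedType.Exports.
Local Open Scope ring_scope.

Section Defs.
Variables (R : realType) (d : nat).
Notation vec := 'rV[R]_d.

Definition dotv (u v : vec) : R := \sum_(j < d) u 0 j * v 0 j.
Definition enorm (u : vec) : R := Num.sqrt (dotv u u).

Definition is_gradient (f : vec -> R) (g : vec -> vec) : Prop :=
  forall x, differentiable f x /\ forall h, ('d f x) h = dotv (g x) h.

Definition L_smooth (L : R) (f : vec -> R) (g : vec -> vec) : Prop :=
  is_gradient f g /\ forall x y, enorm (g x - g y) <= L * enorm (x - y).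

Variables (n : nat) (g : 'I_n -> vec -> vec) (gamma : R).

(* Inner state before step t: (x_s^{t-1}, x_s^t, v_s^{t-1}, tilde v_s^t). *)
Definition nfg_inner_step (i : 'I_n) (t : nat) (st : vec * vec * vec * vec)
  : vec * vec * vec * vec :=
  let: (xp, xc, vc, vt) := st in
  let g1 := g i xc in
  let g0 := g i xp in
  let vt' := ((t%:R - 1) / t%:R) *: vt + (t%:R)^-1 *: g1 in
  let v' := (n%:R)^-1 *: (g1 - g0) + vc in
  (xc, xc - gamma *: v', v', vt').

(* One epoch with permutation p (pi_s^t = p (t-1), components indexed by 'I_n):
   input (x_s^0, v_s), output (x_{s+1}^0, v_{s+1}) = (x_s^{n+1}, tilde v_s^{n+1}). *)
Definition nfg_epoch (p : {perm 'I_n}) (st : vec * vec) : vec * vec :=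
  let: (x0, v) := st in
  let: (_, xc, _, vt) :=
    foldl (fun acc (i : 'I_n) => nfg_inner_step (p i) (val i).+1 acc)
          (x0, x0 - gamma *: v, v, 0) (enum 'I_n) in
  (xc, vt).

(* run pi x00 s = (x_s^0, v_s), with v_0 = 0. *)
Fixpoint nfg_run (pi : nat -> {perm 'I_n}) (x00 : vec) (s : nat) : vec * vec :=
  match s with
  | 0 => (x00, 0)
  | s'.+1 => nfg_epoch (pi s') (nfg_run pi x00 s')
  end.
End Defs.

Definition favg (R : realType) (d n : nat) (f : 'I_n -> 'rV[R]_d -> R)
  (x : 'rV[R]_d) : R := (n%:R)^-1 * \sum_(i < n) f i x.
Definition gavg (R : realType) (d n : nat) (g : 'I_n -> 'rV[R]_d -> 'rV[R]_d)
  (x : 'rV[R]_d) : 'rV[R]_d := (n%:R)^-1 *: \sum_(i < n) g i x.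

(* Main.v *)
Require Import Defs.
From HB Require Import structures.
From mathcomp Require Import all_boot all_order all_algebra all_fingroup.
From mathcomp Require Import all_classical all_reals all_analysis.
From mathcomp Require Import ring lra.
Import Order.TTheory GRing.Theory Num.Theory.
Import numFieldNormedType.Exports.
Local Open Scope ring_scope.
Set Implicit Arguments. Unset Strict Implicit. Unset Printing Implicit Defensive.
Section Vec.
Variables (R : realType) (d : nat).
Notation vec := 'rV[R]_d.
Implicit Types u v w : vec.

Lemma dotvC u v : dotv u v = dotv v u.
Proof. by apply: eq_bigr => j _; rewrite mulrC. Qed.

Lemma dotvDl u w v : dotv (u + w) v = dotv u v + dotv w v.
Proof. by rewrite /dotv -big_split; apply: eq_bigr => j _; rewrite !mxE mulrDl. Qed.

Lemma dotvZl a u v : dotv (a *: u) v = a * dotv u v.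
Proof. by rewrite /dotv mulr_sumr; apply: eq_bigr => j _; rewrite !mxE mulrA. Qed.

Lemma dotvNl u v : dotv (- u) v = - dotv u v.
Proof. by rewrite -scaleN1r dotvZl mulN1r. Qed.

Lemma dotvBl u w v : dotv (u - w) v = dotv u v - dotv w v.
Proof. by rewrite dotvDl dotvNl. Qed.

Lemma dotvDr u w v : dotv v (u + w) = dotv v u + dotv v w.
Proof. by rewrite dotvC dotvDl !(dotvC v). Qed.

Lemma dotvZr a u v : dotv v (a *: u) = a * dotv v u.
Proof. by rewrite dotvC dotvZl dotvC. Qed.

Lemma dotvBr u w v : dotv v (u - w) = dotv v u - dotv v w.
Proof. by rewrite dotvC dotvBl !(dotvC v). Qed.

Lemma dotv0l v : dotv (0 : vec) v = 0.
Proof. by rewrite -(scale0r (0:vec)) dotvZl mul0r. Qed.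

Lemma dotv_suml I (r : seq I) (P : pred I) (F : I -> vec) v :
  dotv (\sum_(i <- r | P i) F i) v = \sum_(i <- r | P i) dotv (F i) v.
Proof.
elim/big_rec2: _ => [|i y1 y2 _ <-]; first exact: dotv0l.
by rewrite dotvDl.
Qed.

Lemma sqself_ge0 (x : R) : 0 <= x * x.
Proof. by rewrite -expr2 sqr_ge0. Qed.

Lemma dotvv_ge0 v : 0 <= dotv v v.
Proof. by apply: sumr_ge0 => j _; rewrite -expr2 sqr_ge0. Qed.

Lemma dotvv_eq0 v : dotv v v = 0 -> v = 0.
Proof.
move=> H; apply/rowP => j; rewrite mxE.
have /eqP := @psumr_eq0P R _ predT (fun j => v 0 j * v 0 j)
  (fun j _ => sqself_ge0 _) H j isT.
by rewrite mulf_eq0 orbb => /eqP.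
Qed.


Lemma enorm_ge0 v : 0 <= enorm v.
Proof. exact: sqrtr_ge0. Qed.

Lemma sqr_enorm v : enorm v ^+ 2 = dotv v v.
Proof. by rewrite sqr_sqrtr // dotvv_ge0. Qed.

Lemma enorm0 : enorm (0 : vec) = 0.
Proof. by rewrite /enorm dotv0l sqrtr0. Qed.

Lemma enorm_eq0 v : enorm v = 0 -> v = 0.
Proof. by move=> H; apply: dotvv_eq0; rewrite -sqr_enorm H expr0n. Qed.

Lemma CS u v : dotv u v <= enorm u * enorm v.
Proof.
have [/enorm_eq0 ->|ua] := eqVneq (enorm u) 0; first by rewrite dotv0l enorm0 mul0r.
have [/enorm_eq0 ->|vb] := eqVneq (enorm v) 0.
  by rewrite dotvC dotv0l enorm0 mulr0.
set a := enorm u in ua *; set b := enorm v in vb *.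
have a0 : 0 < a by rewrite lt_def ua enorm_ge0.
have b0 : 0 < b by rewrite lt_def vb enorm_ge0.
have := dotvv_ge0 (b *: u - a *: v).
rewrite !(dotvBl, dotvBr, dotvZl, dotvZr) -!sqr_enorm -/a -/b (dotvC v u).
move=> H.
have H2 : 0 <= 2 * a * b * (a * b - dotv u v) by nra.
rewrite -subr_ge0; move: H2; rewrite pmulr_rge0 //.
by rewrite !mulr_gt0.
Qed.

Lemma enormD u v : enorm (u + v) <= enorm u + enorm v.
Proof.
rewrite -(ler_pXn2r (_ : (0 < 2)%N)) ?nnegrE ?addr_ge0 ?enorm_ge0 //.
rewrite sqr_enorm dotvDl !dotvDr -!sqr_enorm (dotvC v u).
have := CS u v; have := enorm_ge0 u; have := enorm_ge0 v; nra.
Qed.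

Lemma enormZ a v : enorm (a *: v) = `|a| * enorm v.
Proof.
rewrite /enorm dotvZl dotvZr mulrA -expr2 sqrtrM ?sqr_ge0 //.
by rewrite sqrtr_sqr.
Qed.

Lemma enormN v : enorm (- v) = enorm v.
Proof. by rewrite -scaleN1r enormZ normrN normr1 mul1r. Qed.

Lemma enormB u v : enorm (u - v) <= enorm u + enorm v.
Proof. by rewrite -(enormN v) enormD. Qed.

Lemma enormBC u v : enorm (u - v) = enorm (v - u).
Proof. by rewrite -enormN opprB. Qed.

Lemma enorm_sum I (r : seq I) (P : pred I) (F : I -> vec) :
  enorm (\sum_(i <- r | P i) F i) <= \sum_(i <- r | P i) enorm (F i).
Proof.
elim/big_rec2: _ => [|i y1 y2 _ H]; first by rewrite enorm0.
by apply: le_trans (enormD _ _) _; rewrite lerD2l.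
Qed.

Lemma enorm_sqrtE v c : 0 <= c -> dotv v v <= c ^+ 2 -> enorm v <= c.
Proof.
move=> c0 H; rewrite -(ler_pXn2r (_ : (0 < 2)%N)) ?nnegrE ?enorm_ge0 //.
by rewrite sqr_enorm.
Qed.


Lemma line_is_derive (f : vec -> R) x h t :
  differentiable f (t *: h + x) ->
  is_derive t 1 (fun s : R => f (s *: h + x)) ('d f (t *: h + x) h).
Proof.
move=> df.
have E : (fun e : R => e^-1 *: ((fun s : R => f (s *: h + x)) (e *: 1 + t)
              - (fun s : R => f (s *: h + x)) t)) =
         (fun e : R => e^-1 *: (f (e *: h + (t *: h + x)) - f (t *: h + x))).
  apply/funext => e /=.
  by rewrite -[e *: 1]/(e * 1) mulr1 scalerDl addrA.
have dv : derivable f (t *: h + x) h := diff_derivable df.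
apply: DeriveDef.
  by rewrite /derivable E.
by rewrite /derive E; exact: deriveE.
Qed.

Lemma descent (L : R) (f : vec -> R) (g : vec -> vec) x y :
  0 <= L -> L_smooth L f g ->
  f y <= f x + dotv (g x) (y - x) + L * enorm (y - x) ^+ 2.
Proof.
move=> L0 [gr lip].
set h := y - x.
pose phi := fun s : R => f (s *: h + x).
have der : forall t : R, is_derive t 1 phi (dotv (g (t *: h + x)) h).
  move=> t; have [df dd] := gr (t *: h + x).
  rewrite -dd; exact: line_is_derive.
have [c c01 E] := MVT ltr01 (fun t _ => der t)
  (derivable_within_continuous (fun t _ => ltac:(by have := der t => -[]))).
have -> : f y = phi 1 by rewrite /phi scale1r /h addrNK.
have -> : f x = phi 0 by rewrite /phi scale0r add0r.
move: E; rewrite subr0 mulr1 => /eqP; rewrite subr_eq => /eqP ->.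
rewrite addrC -addrA lerD2l.
have -> : dotv (g (c *: h + x)) h = dotv (g x) h + dotv (g (c *: h + x) - g x) h.
  by rewrite dotvBl; ring.
rewrite lerD2l.
have c0 : 0 <= c by move: c01; rewrite in_itv /= => /andP [/ltW].
have c1 : c <= 1 by move: c01; rewrite in_itv /= => /andP [_ /ltW].
apply: le_trans (CS _ _) _.
have := lip (c *: h + x) x; rewrite addrK enormZ ger0_norm // => H.
apply: le_trans (ler_wpM2r (enorm_ge0 _) H) _.
rewrite expr2 mulrA ler_wpM2r ?enorm_ge0 //.
rewrite mulrCA.
by rewrite ler_piMl ?mulr_ge0 ?enorm_ge0.
Qed.
End Vec.

Section Epoch.
Variables (R : realType) (d n : nat) (g : 'I_n -> 'rV[R]_d -> 'rV[R]_d).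
Variables (gamma L : R).
Notation vec := 'rV[R]_d.
Hypothesis n0 : (0 < n)%N.
Hypothesis L0 : 0 <= L.
Hypothesis gam0 : 0 <= gamma.
Hypothesis q2 : 2 * (L * gamma) <= 1.
Hypothesis lip : forall i x y, enorm (g i x - g i y) <= L * enorm (x - y).

Definition inv (p : {perm 'I_n}) (x0 v : vec) (k : nat) (st : vec * vec * vec * vec) : Prop :=
  let: (xp, xc, vc, vt) := st in
  [/\ xc = xp - gamma *: vc,
   enorm (vc - v) <= k%:R * (2 * (L * gamma) * enorm v / n%:R),
   enorm (xc - (x0 - (k.+1%:R * gamma) *: v)) <= k.+1%:R * gamma * (2 * (L * gamma) * enorm v) &
   enorm (k%:R *: vt - \sum_(i <- take k (enum 'I_n)) g (p i) x0)
     <= k%:R * (L * (2 * (n%:R + 1) * gamma * enorm v))].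

Lemma inv0 p x0 v : inv p x0 v 0 (x0, x0 - gamma *: v, v, 0).
Proof.
split => //.
- by rewrite subrr enorm0 mul0r.
- by rewrite mul1r subrr enorm0 mulr_ge0 ?mulr_ge0 ?enorm_ge0.
- by rewrite scale0r take0 big_nil subrr enorm0 mul0r.
Qed.

Lemma inv_step p x0 v k (hk : (k < n)%N) st :
  inv p x0 v k st ->
  inv p x0 v k.+1 (nfg_inner_step g gamma (p (Ordinal hk)) k.+1 st).
Proof.
case: st => [[[xp xc] vc] vt] [J0 J1 J2 J3] /=.
set i := p (Ordinal hk).
set a := enorm v in J1 J2 J3 *.
set B := 2 * (L * gamma) * a in J1 J2 J3 *.
set b := B / n%:R in J1 J2 J3 *.
have a0 : 0 <= a by exact: enorm_ge0.
have q0 : 0 <= L * gamma by rewrite mulr_ge0.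
have B0 : 0 <= B by rewrite mulr_ge0 ?mulr_ge0.
have nR0 : 0 < n%:R :> R by rewrite ltr0n.
have b0 : 0 <= b by rewrite divr_ge0 // ltW.
have nb : n%:R * b = B by rewrite /b mulrC divfK // gt_eqF.
have kn : k%:R <= n%:R :> R by rewrite ler_nat ltnW.
have k1n : k.+1%:R <= n%:R :> R by rewrite ler_nat.
have kb : k%:R * b <= B by rewrite -nb ler_wpM2r.
have k1b : k.+1%:R * b <= B by rewrite -nb ler_wpM2r.
have BA : B <= a by rewrite /B ler_piMl.
have vcb : enorm vc <= a + B.
  have -> : vc = (vc - v) + v by rewrite subrK.
  apply: le_trans (enormD _ _) _. rewrite -/a; lra.
have gd : enorm (g i xc - g i xp) <= L * gamma * (a + B).
  apply: le_trans (lip _ _ _) _.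
  rewrite J0 addrC addKr enormN enormZ ger0_norm // mulrA.
  by rewrite ler_wpM2l.
have LB : L * gamma * (a + B) <= B.
  rewrite /B; move: q2 q0 a0; move: (L * gamma) => q h2 h0 ha.
  have qa : 0 <= q * a by rewrite mulr_ge0.
  nra.
have J1' : enorm ((n%:R)^-1 *: (g i xc - g i xp) + vc - v) <= k.+1%:R * b.
  rewrite -addrA addrC; apply: le_trans (enormD _ _) _.
  rewrite enormZ ger0_norm ?invr_ge0 ?ler0n // -natr1 mulrDl mul1r.
  apply: lerD => //.
  rewrite /b mulrC ler_wpM2r ?invr_ge0 ?ler0n //.
  exact: le_trans gd LB.
set v' := (n%:R)^-1 *: (g i xc - g i xp) + vc.
have xcb : enorm (xc - x0) <= 2 * (n%:R + 1) * gamma * a.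
  have -> : xc - x0 = (xc - (x0 - (k.+1%:R * gamma) *: v)) - (k.+1%:R * gamma) *: v.
    by apply/rowP => j; rewrite !mxE; ring.
  apply: le_trans (enormB _ _) _.
  rewrite enormZ ger0_norm ?mulr_ge0 ?ler0n //.
  have : k.+1%:R <= n%:R + 1 :> R by rewrite -natr1 lerD2r.
  have : 0 <= k.+1%:R :> R by rewrite ler0n.
  move: J2; rewrite -/a -/B => J2.
  move=> K0 Kn.
  have h1 : k.+1%:R * gamma * B <= k.+1%:R * gamma * a by rewrite ler_wpM2l ?mulr_ge0.
  have h2 : k.+1%:R * gamma * a <= (n%:R + 1) * gamma * a by rewrite ler_wpM2r // ler_wpM2r.
  lra.
split.
- by [].
- exact: J1'.
- have -> : xc - gamma *: v' - (x0 - (k.+2%:R * gamma) *: v) =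
      (xc - (x0 - (k.+1%:R * gamma) *: v)) - gamma *: (v' - v).
    rewrite -(natr1 k.+1); apply/rowP => j; rewrite !mxE; ring.
  apply: le_trans (enormB _ _) _.
  rewrite enormZ ger0_norm //.
  move: J2; rewrite -/a -/B => J2.
  have : gamma * enorm (v' - v) <= gamma * B.
    by rewrite ler_wpM2l //; exact: le_trans J1' k1b.
  rewrite -(natr1 k.+1); nra.
- have hs : (k < size (enum 'I_n))%N by rewrite size_enum_ord.
  rewrite (take_nth (Ordinal hk) hs).
  have -> : nth (Ordinal hk) (enum (ordinal n)) k = Ordinal hk := nth_ord_enum _ (Ordinal hk).
  rewrite big_rcons /= -/i.
  have -> : k.+1%:R *: (((k.+1%:R - 1) / k.+1%:R) *: vt + (k.+1%:R)^-1 *: g i xc)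
      - (\sum_(j <- take k (enum 'I_n)) g (p j) x0 + g i x0) =
      (k%:R *: vt - \sum_(j <- take k (enum 'I_n)) g (p j) x0) + (g i xc - g i x0).
    have k10 : k.+1%:R != 0 :> R by rewrite pnatr_eq0.
    rewrite scalerDr !scalerA mulfV // scale1r -natr1 addrK.
    rewrite mulrC divfK ?natr1 //.
    by rewrite opprD addrACA.
  apply: le_trans (enormD _ _) _.
  have := lip i xc x0.
  move: J3; rewrite -/a => J3.
  rewrite -natr1 mulrDl mul1r => H.
  apply: lerD => //.
  apply: le_trans H _.
  by rewrite ler_wpM2l.
Qed.

Definition Fstep (p : {perm 'I_n}) := fun acc (i : 'I_n) => nfg_inner_step g gamma (p i) (val i).+1 acc.

Lemma inv_all p x0 v k : (k <= n)%N ->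
  inv p x0 v k (foldl (Fstep p) (x0, x0 - gamma *: v, v, 0) (take k (enum 'I_n))).
Proof.
elim: k => [_|k IH hk]; first by rewrite take0 /=; exact: inv0.
have hs : (k < size (enum 'I_n))%N by rewrite size_enum_ord.
rewrite (take_nth (Ordinal hk) hs).
have -> : nth (Ordinal hk) (enum (ordinal n)) k = Ordinal hk := nth_ord_enum _ (Ordinal hk).
rewrite foldl_rcons.
exact: (inv_step hk (IH (ltnW hk))).
Qed.

Lemma gavg_lip x y : enorm (gavg g x - gavg g y) <= L * enorm (x - y).
Proof.
rewrite /gavg -scalerBr -sumrB enormZ ger0_norm ?invr_ge0 ?ler0n //.
apply: le_trans (ler_wpM2l _ (enorm_sum _ _ _)) _; first by rewrite invr_ge0 ler0n.
apply: le_trans (ler_wpM2l _ (ler_sum _ (fun i _ => lip i x y))) _.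
  by rewrite invr_ge0 ler0n.
rewrite sumr_const card_ord -[L * enorm (x - y) *+ n]mulr_natl mulKf // pnatr_eq0 -lt0n //.
Qed.

Lemma epoch_bounds p x0 v :
  enorm ((nfg_epoch g gamma p (x0, v)).1 - (x0 - ((n%:R + 1) * gamma) *: v))
    <= (n%:R + 1) * gamma * (2 * (L * gamma) * enorm v) /\
  enorm ((nfg_epoch g gamma p (x0, v)).2 - gavg g (nfg_epoch g gamma p (x0, v)).1)
    <= 2 * L * (2 * (n%:R + 1) * gamma * enorm v).
Proof.
have := inv_all p x0 v (leqnn n).
rewrite take_oversize ?size_enum_ord // /nfg_epoch.
rewrite -/(Fstep p).
case: (foldl (Fstep p) _ _) => [[[xp xc] vc] vt] [J0 J1 J2 J3] /=.
rewrite natr1 in J2 *. split => //.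
set a := enorm v in J1 J2 J3 *.
set B := 2 * (L * gamma) * a in J1 J2 J3 *.
have a0 : 0 <= a by exact: enorm_ge0.
have q0 : 0 <= L * gamma by rewrite mulr_ge0.
have BA : B <= a by rewrite /B ler_piMl.
have nR0 : 0 < n%:R :> R by rewrite ltr0n.
set r := 2 * (n.+1%:R) * gamma * a.
have xcb : enorm (xc - x0) <= r.
  have -> : xc - x0 = (xc - (x0 - (n.+1%:R * gamma) *: v)) - (n.+1%:R * gamma) *: v.
    by apply/rowP => j; rewrite !mxE; ring.
  apply: le_trans (enormB _ _) _.
  rewrite enormZ ger0_norm ?mulr_ge0 ?ler0n // -/a.
  have h1 : n.+1%:R * gamma * B <= n.+1%:R * gamma * a by rewrite ler_wpM2l ?mulr_ge0.
  rewrite /r; lra.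
have e1 : \sum_(i <- enum 'I_n) g (p i) x0 = \sum_i g i x0.
  rewrite big_enum /= [RHS](reindex_inj (@perm_inj _ p)). by apply: eq_bigl => i; rewrite inE.
rewrite take_oversize ?size_enum_ord // e1 in J3.
have e2 : vt - gavg g x0 = (n%:R)^-1 *: (n%:R *: vt - \sum_i g i x0).
  by rewrite /gavg scalerBr scalerA mulVf ?gt_eqF // scale1r.
have h3 : enorm (vt - gavg g x0) <= L * r.
  rewrite e2 enormZ ger0_norm ?invr_ge0 ?ler0n //.
  rewrite ler_pdivrMl //.
  move: J3; rewrite /r -natr1; lra.
have -> : vt - gavg g xc = (vt - gavg g x0) + (gavg g x0 - gavg g xc) by rewrite addrA subrK.
apply: le_trans (enormD _ _) _.
have h4 := gavg_lip x0 xc; rewrite (enormBC x0 xc) in h4.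
have h5 : L * enorm (xc - x0) <= L * r by rewrite ler_wpM2l.
rewrite -/r; lra.
Qed.
End Epoch.

Lemma favg_descent (R : realType) (d n : nat) (L : R)
  (f : 'I_n -> 'rV[R]_d -> R) (g : 'I_n -> 'rV[R]_d -> 'rV[R]_d) x y :
  (0 < n)%N -> 0 <= L -> (forall i, L_smooth L (f i) (g i)) ->
  favg f y <= favg f x + dotv (gavg g x) (y - x) + L * enorm (y - x) ^+ 2.
Proof.
move=> n0 L0 hs.
have H : \sum_(i < n) f i y <= \sum_(i < n) (f i x + dotv (g i x) (y - x) + L * enorm (y - x) ^+ 2).
  by apply: ler_sum => i _; apply: descent.
rewrite !big_split /= sumr_const card_ord in H.
rewrite /favg /gavg dotvZl dotv_suml.
have nR : n%:R != 0 :> R by rewrite pnatr_eq0 -lt0n.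
apply: le_trans (ler_wpM2l _ H) _; first by rewrite invr_ge0 ler0n.
by rewrite !mulrDr -[L * enorm (y - x) ^+ 2 *+ n]mulr_natl mulKf.
Qed.

Lemma scal (R : realType) (G q rho fx fx' N a a' W D P : R) :
  0 < G -> 0 <= q -> q <= 1/40 -> 0 <= rho -> rho <= 1/20 -> 0 <= a -> 0 <= a' ->
  0 <= W -> 0 <= D ->
  fx' <= fx - G * P + rho * G * W ^+ 2 ->
  D ^+ 2 = W ^+ 2 - 2 * P + N ^+ 2 ->
  D <= 2 * q * a + 4 * rho * a' ->
  (1 - 2 * q) * a <= W ->
  fx' + G * a ^+ 2 / 25 <= fx + G * a' ^+ 2 / 25 - G / 2 * N ^+ 2.
Proof.
move=> G0 q0 q1 r0 r1 a0 a'0 W0 D0 Hf HD HDb HW.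
have eP : P = (W ^+ 2 + N ^+ 2 - D ^+ 2) / 2.
  by rewrite HD; field.
have hq : 0 <= 1 - 2 * q by lra.
have hW2 : ((1 - 2 * q) * a) ^+ 2 <= W ^+ 2.
  by rewrite ler_pXn2r ?nnegrE ?mulr_ge0.
have hq2 : (19/20) ^+ 2 <= (1 - 2 * q) ^+ 2.
  by rewrite ler_pXn2r ?nnegrE //; lra.
have hW3 : (19/20) ^+ 2 * a ^+ 2 <= W ^+ 2.
  apply: le_trans hW2; rewrite [X in _ <= X]exprMn; apply: ler_wpM2r; [exact: sqr_ge0 | exact: hq2].
have hrW : rho * W ^+ 2 <= W ^+ 2 / 20.
  rewrite mulrC; apply: ler_wpM2l; [exact: sqr_ge0 | lra].
have hD2 : D ^+ 2 <= (2 * q * a + 4 * rho * a') ^+ 2.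
  by rewrite ler_pXn2r ?nnegrE // addr_ge0 ?mulr_ge0.
have hD3 : (2 * q * a + 4 * rho * a') ^+ 2 <= 2 * (2 * q * a) ^+ 2 + 2 * (4 * rho * a') ^+ 2.
  have := sqr_ge0 (2 * q * a - 4 * rho * a'); rewrite !expr2; lra.
have hqa : (2 * q * a) ^+ 2 <= a ^+ 2 / 400.
  have h2q : (2 * q) ^+ 2 <= (1/20) ^+ 2 by rewrite ler_pXn2r ?nnegrE ?mulr_ge0 //; lra.
  have ha2 := sqr_ge0 a.
  rewrite exprMn; move: h2q ha2; move: ((2 * q) ^+ 2) (a ^+ 2) => u w; rewrite expr2; nra.
have hra : (4 * rho * a') ^+ 2 <= a' ^+ 2 / 25.
  have h2q : (4 * rho) ^+ 2 <= (1/5) ^+ 2 by rewrite ler_pXn2r ?nnegrE ?mulr_ge0 //; lra.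
  have ha2 := sqr_ge0 a'.
  rewrite exprMn; move: h2q ha2; move: ((4 * rho) ^+ 2) (a' ^+ 2) => u w; rewrite expr2; nra.
have key : - (W ^+ 2 / 2) + D ^+ 2 / 2 + rho * W ^+ 2 + a ^+ 2 / 25 <= a' ^+ 2 / 25.
  have e19 : (19/20) ^+ 2 * a ^+ 2 = 361/400 * a ^+ 2 :> R by rewrite expr2; field.
  rewrite e19 in hW3.
  move: hW3 hrW hD2 hD3 hqa hra (sqr_ge0 a) (sqr_ge0 a').
  move: (W ^+ 2) (D ^+ 2) (rho * W ^+ 2) (a ^+ 2) (a' ^+ 2) ((2 * q * a) ^+ 2) ((4 * rho * a') ^+ 2)
    ((2 * q * a + 4 * rho * a') ^+ 2) => w2 d2 rw2 a2 a'2 u1 u2 u3.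
  lra.
rewrite eP in Hf.
have : G * (- (W ^+ 2 / 2) + D ^+ 2 / 2 + rho * W ^+ 2 + a ^+ 2 / 25) <= G * (a' ^+ 2 / 25).
  by rewrite ler_wpM2l // ltW.
move: Hf; clear.
move=> Hf Hk.
have E1 : G * (- (W ^+ 2 / 2) + D ^+ 2 / 2 + rho * W ^+ 2 + a ^+ 2 / 25) =
  - (G * (W ^+ 2 + N ^+ 2 - D ^+ 2) / 2) + rho * G * W ^+ 2 + G * a ^+ 2 / 25 + G / 2 * N ^+ 2.
  by field.
rewrite E1 in Hk.
have E2 : G * ((W ^+ 2 + N ^+ 2 - D ^+ 2) / 2) = G * (W ^+ 2 + N ^+ 2 - D ^+ 2) / 2 by field.
rewrite E2 in Hf.
have E3 : G * (a' ^+ 2 / 25) = G * a' ^+ 2 / 25 by field.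
rewrite E3 in Hk.
lra.
Qed.

Theorem theorem3 :
  exists C : nat,
  forall (R : realType) (d n : nat) (L gamma : R)
         (f : 'I_n -> 'rV[R]_d -> R) (g : 'I_n -> 'rV[R]_d -> 'rV[R]_d)
         (pi : nat -> {perm 'I_n}) (x00 : 'rV[R]_d),
    (0 < n)%N -> 0 < L ->
    (forall i, L_smooth L (f i) (g i)) ->
    has_lbound (range (favg f)) ->
    0 < gamma -> gamma <= (20 * L * (n%:R + 1))^-1 ->
    forall (eps : R) (S : nat), 0 < eps -> (0 < S)%N ->
      C%:R * (favg f x00 - inf (range (favg f)))
        / (gamma * (n%:R + 1) * eps ^+ 2) <= S%:R ->
      (S%:R)^-1 * \sum_(1 <= s < S.+1)
          enorm (gavg g (nfg_run g gamma pi x00 s).1) ^+ 2 <= eps ^+ 2.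
Proof.
exists 2%N.
move=> R d n L gamma f g pi x00 n0 Lp hs hlb g0 gle eps S e0 S0 hS.
have L0 : 0 <= L := ltW Lp.
set finf := inf (range (favg f)) in hS *.
pose X s := (nfg_run g gamma pi x00 s).1.
pose V s := (nfg_run g gamma pi x00 s).2.
have run_succ s : nfg_run g gamma pi x00 s.+1 = nfg_epoch g gamma (pi s) (X s, V s).
  by rewrite /X /V /=; case: (nfg_run g gamma pi x00 s).
have lip i : forall x y, enorm (g i x - g i y) <= L * enorm (x - y) := (hs i).2.
have n1 : 1 <= n%:R :> R by rewrite ler1n.
have nR0 : 0 < n%:R + 1 :> R by lra.
set G := gamma * (n%:R + 1) in hS *.
have G0 : 0 < G by rewrite mulr_gt0.
have rho20 : L * G <= 1/20.
  have hp : 0 < 20 * L * (n%:R + 1) by rewrite !mulr_gt0 //.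
  have := ler_wpM2r (ltW hp) gle; rewrite mulVf ?gt_eqF // => h.
  have e : gamma * (20 * L * (n%:R + 1)) = 20 * (L * G) by rewrite /G; ring.
  rewrite e in h; lra.
have q40 : L * gamma <= 1/40.
  have e : L * G = L * gamma * (n%:R + 1) by rewrite /G mulrA.
  have : (L * gamma) * 2 <= L * gamma * (n%:R + 1).
    by apply: ler_wpM2l; [rewrite mulr_ge0 ?ltW | lra].
  lra.
have q2 : 2 * (L * gamma) <= 1 by lra.
have EB := epoch_bounds n0 L0 (ltW g0) q2 lip.
have EA s : enorm (X s.+1 - (X s - ((n%:R + 1) * gamma) *: V s))
    <= (n%:R + 1) * gamma * (2 * (L * gamma) * enorm (V s)) /\
  enorm (V s.+1 - gavg g (X s.+1)) <= 2 * L * (2 * (n%:R + 1) * gamma * enorm (V s)).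
  by rewrite /X /V run_succ; exact: EB.
pose N s := enorm (gavg g (X s)).
pose a s := enorm (V s).
have step t : favg f (X t.+2) + G * a t.+1 ^+ 2 / 25
    <= favg f (X t.+1) + G * a t ^+ 2 / 25 - G / 2 * N t.+1 ^+ 2.
  have [A1 _] := EA t.+1.
  have [_ B1] := EA t.
  rewrite [(n%:R + 1) * gamma]mulrC -/G in A1 B1.
  set x := X t.+1 in A1 B1 *.
  set v := V t.+1 in A1 B1 *.
  set x' := X t.+2 in A1 B1 *.
  set gr := gavg g x.
  set w := G^-1 *: (x - x').
  have hw : x' - x = (- G) *: w.
    by rewrite /w scalerA mulNr mulfV ?gt_eqF // scaleN1r opprB.
  have Df := favg_descent x x' n0 L0 hs.
  rewrite hw dotvZr enormZ normrN gtr0_norm // -/gr in Df.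
  have hwv : enorm (w - v) <= 2 * (L * gamma) * a t.+1.
    have -> : w - v = G^-1 *: (- (x' - (x - G *: v))).
      have Gn : G != 0 by rewrite gt_eqF.
      by rewrite /w; apply/rowP => j; rewrite !mxE; field.
    rewrite enormZ enormN ger0_norm; last by rewrite invr_ge0 ltW.
    rewrite ler_pdivrMl // mulrA.
  have hvg : enorm (v - gr) <= 4 * (L * G) * a t.
    apply: (le_trans B1); rewrite /G /a; rewrite le_eqVlt; apply/orP; left; apply/eqP; ring.
  apply: (@scal R G (L * gamma) (L * G) (favg f x) (favg f x') (N t.+1) (a t.+1) (a t)
      (enorm w) (enorm (w - gr)) (dotv gr w)) => //.
  - exact: mulr_ge0 L0 (ltW g0).
  - exact: mulr_ge0 L0 (ltW G0).
  - exact: enorm_ge0.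
  - exact: enorm_ge0.
  - exact: enorm_ge0.
  - exact: enorm_ge0.
  - apply: (le_trans Df); rewrite le_eqVlt; apply/orP; left; apply/eqP; ring.
  - rewrite !sqr_enorm dotvBl !dotvBr (dotvC w gr); ring.
  - have -> : w - gr = (w - v) + (v - gr) by rewrite addrA subrK.
    apply: (le_trans (enormD _ _)); lra.
  - have : a t.+1 <= enorm (v - w) + enorm w.
      by rewrite /a -/v; have := enormD (v - w) w; rewrite subrK.
    rewrite enormBC; lra.
have tele S' : favg f (X S'.+1) + G * a S' ^+ 2 / 25
    + G / 2 * \sum_(1 <= s < S'.+1) N s ^+ 2 <= favg f (X 1).
  elim: S' => [|S' IH].
    rewrite big_geq // /a /V /= enorm0 expr0n /= mulr0 mul0r. by rewrite mulr0 !addr0.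
  rewrite big_nat_recr //=.
  have := step S'; lra.
have X1 : X 1 = x00.
  have [A0 _] := EA 0.
  have : enorm (X 1 - (X 0 - ((n%:R + 1) * gamma) *: V 0)) = 0.
    apply/eqP; rewrite eq_le enorm_ge0 andbT.
    by apply: (le_trans A0); rewrite /V /= enorm0 !mulr0.
  move/enorm_eq0; rewrite /V /= scaler0 subr0 => /eqP.
  by rewrite subr_eq0 => /eqP.
have lb : finf <= favg f (X S.+1).
  by apply: (ge_inf hlb); exists (X S.+1).
have tS := tele S.
rewrite X1 in tS.
have hsum : \sum_(1 <= s < S.+1) enorm (gavg g (nfg_run g gamma pi x00 s).1) ^+ 2
    = \sum_(1 <= s < S.+1) N s ^+ 2 by [].
rewrite hsum.
have e2 : 0 < eps ^+ 2 by rewrite exprn_gt0.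
have Ge : 0 < G * eps ^+ 2 by rewrite mulr_gt0.
rewrite ler_pdivrMr // in hS.
have aS := sqr_ge0 (a S).
have h2 : G * \sum_(1 <= s < S.+1) N s ^+ 2 <= G * (S%:R * eps ^+ 2).
  have e : G / 2 * \sum_(1 <= s < S.+1) N s ^+ 2 = (G * \sum_(1 <= s < S.+1) N s ^+ 2) / 2 by ring.
  have e' : S%:R * (G * eps ^+ 2) = G * (S%:R * eps ^+ 2) by ring.
  have GaS : 0 <= G * a S ^+ 2 / 25 by apply: divr_ge0 => //; apply: mulr_ge0 (ltW G0) aS.
  rewrite e in tS; rewrite e' in hS.
  lra.
rewrite ler_pM2l // in h2.
have S0R : 0 < S%:R :> R by rewrite ltr0n.
by rewrite mulrC ler_pdivrMr // mulrC.
Qed.
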